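(* For every set $X$, the function $\theta_X\colon\mathrm L^+(\mathrm L^+(X))\to\mathrm L^+(\mathrm L^+(X))$ is injective. If $X$ is non-empty, then $\theta_X$ is not surjective.
   Context: For a set $X$, $\mathrm L^+(X)=\coprod_{n>0}X^n$ is the set of non-empty finite lists $[x_1,\dots,x_n]$ of elements of $X$. The map $\theta_X$ sends a list of lists $[[x_{1,1},\dots,x_{1,n_1}],\dots,[x_{m,1},\dots,x_{m,n_m}]]$ (with $m,n_i\ge1$) to the list consisting, in order, for $i=1,\dots,m$ and then $j=1,\dots,n_i$, of the lists $[x_{i,j},x_{i+1,1},x_{i+2,1},\dots,x_{m,1}]$; i.e. $[[x_{1,1},x_{2,1},\dots,x_{m,1}],\dots,[x_{1,n_1},x_{2,1},\dots,x_{m,1}],[x_{2,1},x_{3,1},\dots,x_{m,1}],\dots,[x_{2,n_2},x_{3,1},\dots,x_{m,1}],\dots,[x_{m,1}],\dots,[x_{m,n_m}]]$. *)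

(* Defs.v *)
From Stdlib Require Import List.
Import ListNotations.

(* L^+(X): non-empty finite lists, represented as (first element, rest). *)
Definition Lp (X : Type) : Type := (X * list X)%type.

Definition to_list {X : Type} (l : Lp X) : list X := fst l :: snd l.

(* For lists of non-empty lists L_1, ..., L_m (given as a list),
   theta_aux produces, in order, for each i and each x in L_i, the list
   [x, head L_{i+1}, ..., head L_m]. *)
Fixpoint theta_aux {X : Type} (ls : list (Lp X)) : list (Lp X) :=
  match ls with
  | nil => nil
  | l :: rest =>
      map (fun x => (x, map fst rest)) (to_list l) ++ theta_aux rest
  end.

Definition theta {X : Type} (L : Lp (Lp X)) : Lp (Lp X) :=
  let (l1, rest) := L in
  let (x11, xs1) := l1 in
  ((x11, map fst rest),
   map (fun x => (x, map fst rest)) xs1 ++ theta_aux rest).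

Lemma theta_to_list {X : Type} (L : Lp (Lp X)) :
  to_list (theta L) = theta_aux (to_list L).
Proof. destruct L as [[x xs] rest]; reflexivity. Qed.

(* Main.v *)
Require Import Defs.
From Stdlib Require Import List Lia.
Import ListNotations.

Lemma theta_aux_len {X : Type} (rest : list (Lp X)) :
  forall y, In y (theta_aux rest) -> length (snd y) < length rest.
Proof.
  induction rest as [|l r IH]; intros y H; [contradiction|].
  cbn [theta_aux] in H. cbn [length].
  apply in_app_or in H as [H|H].
  - apply in_map_iff in H as [x [<- _]]. simpl. rewrite length_map. auto.
  - specialize (IH y H). lia.
Qed.

Lemma app_split {A : Type} (P : A -> Prop) (a b a' b' : list A) :
  (forall x, In x a -> P x) -> (forall x, In x a' -> P x) ->
  (forall x, In x b -> ~ P x) -> (forall x, In x b' -> ~ P x) ->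
  a ++ b = a' ++ b' -> a = a' /\ b = b'.
Proof.
  revert a'. induction a as [|h t IH]; intros [|h' t'] Ha Ha' Hb Hb' E; simpl in *.
  - auto.
  - exfalso. apply (Hb h'). rewrite E; left; auto. apply Ha'; auto.
  - exfalso. apply (Hb' h). rewrite <- E; left; auto. apply Ha; auto.
  - injection E as -> E. destruct (IH t') as [-> ->]; auto.
Qed.

Lemma map_pair_inj {X : Type} (m1 m2 : list X) (l1 l2 : list X) :
  map (fun x => (x, m1)) l1 = map (fun x => (x, m2)) l2 -> l1 = l2.
Proof.
  intro E. apply (f_equal (map fst)) in E. rewrite !map_map in E. simpl in E.
  rewrite !map_id in E. exact E.
Qed.

Lemma to_list_inj {X : Type} (a b : Lp X) : to_list a = to_list b -> a = b.
Proof. destruct a, b; unfold to_list; simpl; intro E; injection E; intros; subst; auto. Qed.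

Lemma theta_aux_inj {X : Type} (l1 : list (Lp X)) :
  forall l2, theta_aux l1 = theta_aux l2 -> l1 = l2.
Proof.
  induction l1 as [|a r1 IH]; intros [|b r2] E; cbn [theta_aux] in E; auto.
  - destruct b as [y ys]; simpl in E; discriminate.
  - destruct a as [y ys]; simpl in E; discriminate.
  - assert (Hlen : length r1 = length r2).
    { destruct a as [y ys], b as [z zs]. simpl in E. injection E; intros.
      apply (f_equal (@length X)) in H0. rewrite !length_map in H0. exact H0. }
    apply (app_split (fun y => length (snd y) = length r1)) in E as [E1 E2].
    + apply map_pair_inj, to_list_inj in E1. subst. f_equal. apply IH; auto.
    + intros y Hy. apply in_map_iff in Hy as [x [<- _]]. simpl. apply length_map.
    + intros y Hy. apply in_map_iff in Hy as [x [<- _]]. simpl. rewrite Hlen. apply length_map.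
    + intros y Hy. apply theta_aux_len in Hy. lia.
    + intros y Hy. apply theta_aux_len in Hy. lia.
Qed.

Theorem proposition5p2 :
  forall X : Type,
    (forall L1 L2 : Lp (Lp X), theta L1 = theta L2 -> L1 = L2) /\
    (inhabited X -> ~ (forall M : Lp (Lp X), exists L : Lp (Lp X), theta L = M)).
Proof.
  intro X. split.
  - intros L1 L2 E. apply (f_equal to_list) in E. rewrite !theta_to_list in E.
    apply to_list_inj, theta_aux_inj, E.
  - intros [x] H. destruct (H ((x, [x]), [])) as [[[y ys] rest] E].
    unfold theta in E. injection E as E1 E2 E3.
    apply app_eq_nil in E3 as [_ E3].
    destruct rest as [|[z zs] r]; simpl in *; [discriminate|].
    discriminate.
Qed.
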